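(* Let $A$ be a synaptic algebra and let $p,q\in P$ be in generic position ($p\wedge q=p\wedge q^{\perp}=p^{\perp}\wedge q=p^{\perp}\wedge q^{\perp}=0$). Let $c:=(pqp+p^{\perp}q^{\perp}p^{\perp})^{1/2}$, let $u$ and $v$ be the symmetries of the polar decompositions of $p-q^{\perp}$ and $p-q$, respectively, and put $j:=uvp+pvu$ (so that $q=c^2p+csj+s^2p^{\perp}$ with $s:=(pq^{\perp}p+p^{\perp}qp^{\perp})^{1/2}$). Let $z\in P$. Then $z\in C(p)\cap C(q)$ iff there exists a projection $t\in P$ such that $t=tp=pt\in C(c)$ and $z=t+jtj$.
   Context: Synaptic algebra (Foulis): $R$ is a real linear associative algebra with unit $1$, and $A\subseteq R$ is a real linear subspace with $1\in A$. For $a,b\in A$ write $aCb$ iff $ab=ba$; $C(a):=\{b\in A: aCb\}$; $CC(a):=\{b\in A: bCd \text{ for all } d\in C(a)\}$. $A$ is a synaptic algebra with enveloping algebra $R$ iff: (SA1) $A$ is a partially ordered archimedean real linear space with positive cone $A^+$, $1$ is an order unit, $\|\cdot\|$ the order-unit norm; (SA2) $a\in A\Rightarrow a^2\in A^+$; (SA3) $a,b\in A^+\Rightarrow aba\in A^+$; (SA4) if $a\in A$, $b\in A^+$, $aba=0$ then $ab=ba=0$; (SA5) if $a\in A^+$ there is $b\in A^+\cap CC(a)$ with $b^2=a$; (SA6) for $a\in A$ there is $p=p^2\in A$ with $ab=0\Leftrightarrow pb=0$ for all $b\in A$; (SA7) if $1\le a$ there is $b\in A$ with $ab=ba=1$;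 (SA8) if $a,b\in A$, $a_1\le a_2\le\cdots$ are pairwise commuting elements of $C(b)$ with $\|a-a_n\|\to0$, then $a\in C(b)$. $A$ is nondegenerate. Products are computed in $R$. $P:=\{p\in A:p=p^2\}$ with inherited order is an orthomodular lattice with $p^{\perp}:=1-p$, meet $\wedge$, join $\vee$. For $0\le a$, $a^{1/2}$ is its unique positive square root in $A$, $|a|:=(a^2)^{1/2}$; $a^{\circ}$ is the carrier of $a$ (the unique projection with $ab=0\Leftrightarrow a^{\circ}b=0$ for all $b\in A$). A symmetry is $u\in A$ with $u^2=1$. For $a\in A$, the signum $t$ of $a$ is the partial symmetry with $t^2=a^{\circ}$, $t\in CC(a)$, $a=|a|t=t|a|$; the symmetry of the polar decomposition of $a$ is $t+(a^{\circ})^{\perp}$. *)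

(* Defs.v *)
From mathcomp Require Import all_boot all_order all_algebra.
From mathcomp Require Import boolp classical_sets reals.
Set Implicit Arguments. Unset Strict Implicit. Unset Printing Implicit Defensive.
Import Order.TTheory GRing.Theory Num.Theory.
Local Open Scope ring_scope.
Local Open Scope classical_set_scope.

Section Synaptic.
Variables (R : realType) (V : algType R).
(* V is the enveloping algebra R of the paper; A is the synaptic algebra,
   pos its positive cone A^+. *)
Variables (A : V -> Prop) (pos : V -> Prop).

Definition sle (a b : V) : Prop := pos (b - a).

Definition commute (a b : V) : Prop := a * b = b * a.
Definition inC (a b : V) : Prop := A b /\ commute a b.
Definition inCC (a b : V) : Prop := A b /\ forall d, inC a d -> commute b d.

Definition ou_norm (a : V) : R :=
  inf [set l : R | 0 <= l /\ sle (- (l *: 1)) a /\ sle a (l *: 1)].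

Record synaptic : Prop := Synaptic {
  sa_sub0 : A 0;
  sa_sub1 : A 1;
  sa_subD : forall a b, A a -> A b -> A (a + b);
  sa_subZ : forall (l : R) a, A a -> A (l *: a);
  sa_posA : forall a, pos a -> A a;
  sa_pos0 : pos 0;
  sa_posD : forall a b, pos a -> pos b -> pos (a + b);
  sa_posZ : forall (l : R) a, 0 <= l -> pos a -> pos (l *: a);
  sa_posN : forall a, pos a -> pos (- a) -> a = 0;
  sa_archi : forall a b, A a -> A b ->
      (forall n : nat, sle (a *+ n) b) -> sle a 0;
  sa_unit : forall a, A a -> exists n : nat, sle (- (1 *+ n)) a /\ sle a (1 *+ n);
  sa2 : forall a, A a -> pos (a * a);
  sa3 : forall a b, pos a -> pos b -> pos (a * b * a);
  sa4 : forall a b, A a -> pos b -> a * b * a = 0 -> a * b = 0 /\ b * a = 0;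
  sa5 : forall a, pos a -> exists b, pos b /\ inCC a b /\ b * b = a;
  sa6 : forall a, A a -> exists p, A p /\ p = p * p /\
      (forall b, A b -> (a * b = 0 <-> p * b = 0));
  sa7 : forall a, A a -> sle 1 a -> exists b, A b /\ a * b = 1 /\ b * a = 1;
  sa8 : forall a b (an : nat -> V), A a -> A b ->
      (forall n, inC b (an n)) ->
      (forall n, sle (an n) (an n.+1)) ->
      (forall m n, commute (an m) (an n)) ->
      (forall e : R, 0 < e -> exists N, forall n, (N <= n)%N -> ou_norm (a - an n) < e) ->
      inC b a;
  sa_nondeg : exists a, A a /\ a <> 0
}.

Definition proj (p : V) : Prop := A p /\ p = p * p.
Definition perp (p : V) : V := 1 - p.

Definition is_meet (p q m : V) : Prop :=
  proj m /\ sle m p /\ sle m q /\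
  forall r, proj r -> sle r p -> sle r q -> sle r m.

Definition generic_position (p q : V) : Prop :=
  is_meet p q 0 /\ is_meet p (perp q) 0 /\
  is_meet (perp p) q 0 /\ is_meet (perp p) (perp q) 0.

Definition is_sqrt (a b : V) : Prop := A b /\ pos b /\ b * b = a.

Definition is_carrier (a e : V) : Prop :=
  proj e /\ forall b, A b -> (a * b = 0 <-> e * b = 0).

Definition is_signum (a t : V) : Prop :=
  A t /\ (exists e, is_carrier a e /\ t * t = e) /\ inCC a t /\
  exists abs, is_sqrt (a * a) abs /\ a = abs * t /\ a = t * abs.

Definition polar_symmetry (a u : V) : Prop :=
  exists t e, is_signum a t /\ is_carrier a e /\ u = t + perp e.

End Synaptic.

(* Main.v *)
Require Import Defs.
From mathcomp Require Import all_boot all_order all_algebra.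
From mathcomp Require Import boolp classical_sets reals.
Import Order.TTheory GRing.Theory Num.Theory.
Local Open Scope ring_scope.

Section Zm.
Variable (V : zmodType).
Lemma z_canc (x S T : V) : S = - x + T -> T = 0 -> x + S = 0.
Proof. by move=> -> ->; rewrite addr0 subrr. Qed.
Lemma z_canc' (x S T : V) : S = x + T -> T = 0 -> - x + S = 0.
Proof. by move=> -> ->; rewrite addr0 addNr. Qed.
Lemma z_pullS (z S' y T' : V) : S' = y + T' -> z + S' = y + (z + T').
Proof. by move=> ->; rewrite addrCA. Qed.
Lemma z_start (x y : V) : x - y + 0 = 0 -> x = y.
Proof. by rewrite addr0 => /eqP; rewrite subr_eq0 => /eqP. Qed.
End Zm.

Ltac zpull := first [ exact: erefl | apply: z_pullS; zpull ].
Ltac zcancel := repeat first [ exact: erefl | (apply: z_canc; [zpull|]) | (apply: z_canc'; [zpull|]) ].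
Ltac zsolve := apply: z_start; rewrite ?opprD ?opprB ?opprK -?addrA; zcancel.


Lemma idem_r (V : ringType) (p x : V) : p * p = p -> x * p * p = x * p.
Proof. by move=> h; rewrite -mulrA h. Qed.

Section Syn.
Variables (R : realType) (V : algType R) (A pos : V -> Prop).
Hypothesis HS : synaptic A pos.
Notation comm := (@Defs.commute R V).

Lemma A1 : A 1. Proof. exact: sa_sub1 HS. Qed.
Lemma Asq x : A x -> A (x * x). Proof. by move=> h; apply: (sa_posA HS); apply: (sa2 HS). Qed.
Lemma AN x : A x -> A (- x).
Proof. by move=> h; rewrite -scaleN1r; apply: (sa_subZ HS). Qed.
Lemma AD x y : A x -> A y -> A (x + y). Proof. by move=> ha hb; apply: (sa_subD HS ha hb). Qed.
Lemma AB x y : A x -> A y -> A (x - y). Proof. by move=> hx hy; apply: AD => //; apply: AN. Qed.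
Lemma AJ x y : A x -> A y -> A (x * y + y * x).
Proof.
move=> hx hy.
have -> : x * y + y * x = (x + y) * (x + y) - x * x - y * y.
  rewrite ?mulrDl ?mulrDr; zsolve.
by apply: AB; [apply: AB|]; apply: Asq => //; apply: AD.
Qed.
Lemma two_cancel (z : V) : z + z = 0 -> z = 0.
Proof.
move=> h.
have : (2%:R)^-1 *: (2%:R *: z) = 0 by rewrite scaler_nat (mulr2n z) h scaler0.
by rewrite scalerA mulVf ?scale1r // pnatr_eq0.
Qed.
Lemma Acomm x y : A x -> A y -> comm x y -> A (x * y).
Proof.
move=> hx hy hc.
have -> : x * y = (2%:R)^-1 *: (x * y + y * x).
  by rewrite -hc -mulr2n -scaler_nat scalerA mulVf ?scale1r // pnatr_eq0.
by apply: (sa_subZ HS); apply: AJ.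
Qed.
Lemma pos1 : pos 1. Proof. by rewrite -(mulr1 1); apply: (sa2 HS); apply: A1. Qed.
Lemma sq0 x : A x -> x * x = 0 -> x = 0.
Proof.
move=> hx h; have h0 : x * 1 * x = 0 by rewrite mulr1.
have [h1 _] := sa4 HS hx pos1 h0.
by rewrite -(mulr1 x).
Qed.
Lemma projpos f : proj A f -> pos f.
Proof. by case=> hf ->; apply: (sa2 HS). Qed.
Lemma projA f : proj A f -> A f. Proof. by case. Qed.

Lemma sqrt_eq x b d : is_sqrt A pos x b -> pos d -> inCC A x d -> d * d = x -> b = d.
Proof.
move=> [hb [pb bb]] pd [hdA hdc] dd.
have cbd : d * b = b * d.
  apply: hdc; split=> //; rewrite /Defs.commute -bb; by rewrite mulrA.
set e := b - d.
have eA : A e by apply: AB.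
have ce_b : comm b e by rewrite /Defs.commute /e mulrBl mulrBr cbd.
have ce_d : comm d e by rewrite /Defs.commute /e mulrBl mulrBr cbd.
have key : forall y, pos y -> comm y e -> pos (e * y * e).
  move=> y py cye.
  have [k [pk [[kA kc] kk]]] := sa5 HS py.
  have cke : comm k e by apply: kc; split.
  have -> : e * y * e = (k * e) * (k * e).
    by rewrite -kk !mulrA -cke.
  by apply: (sa2 HS); apply: Acomm.
have p1 := key b pb ce_b.
have p2 := key d pd ce_d.
have sum0 : e * b * e + e * d * e = 0.
  have h : e * (b + d) = 0.
    by rewrite /e mulrDr !mulrBl bb dd cbd addrA subrK subrr.
  by rewrite -mulrDl -mulrDr h mul0r.
have n1 : - (e * b * e) = e * d * e by apply: (addrI (e * b * e)); rewrite subrr sum0.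
have n2 : - (e * d * e) = e * b * e by apply: (addIr (e * d * e)); rewrite addNr sum0.
have z1 : e * b * e = 0 by apply: (sa_posN HS) => //; rewrite n1.
have z2 : e * d * e = 0 by apply: (sa_posN HS) => //; rewrite n2.
have [eb _] := sa4 HS eA pb z1.
have [ed _] := sa4 HS eA pd z2.
have : e = 0 by apply: sq0 => //; rewrite {2}/e mulrBr eb ed subrr.
by move/eqP; rewrite subr_eq0 => /eqP.
Qed.

Lemma sqrt_CC x b : is_sqrt A pos x b -> inCC A x b.
Proof.
move=> hs; have [_ [pb bb]] := hs.
have px : pos x by rewrite -bb; apply: (sa2 HS); case: hs.
have [d [pd [dC dd]]] := sa5 HS px.
by rewrite (sqrt_eq _ _ _ hs pd dC dd).
Qed.

Lemma sqrt_uniq x b d : is_sqrt A pos x b -> is_sqrt A pos x d -> b = d.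
Proof.
move=> hb hd; have [_ [pd dd]] := hd.
by apply: (sqrt_eq _ _ _ hb pd (sqrt_CC _ _ hd) dd).
Qed.


Lemma perp_idem (x : V) : x * x = x -> (1 - x) * (1 - x) = 1 - x.
Proof. by move=> h; rewrite mulrBl mul1r mulrBr mulr1 h subrr subr0. Qed.
Lemma perp_proj x : proj A x -> proj A (1 - x).
Proof. move=> [xA xx]; split; first by apply: AB => //; apply: A1. by rewrite perp_idem. Qed.
Lemma sub_idem (x y : V) : x * x = x -> y * y = y -> x * y = y * x ->
  (x - x * y) * (x - x * y) = x - x * y.
Proof.
move=> hx hy hc.
rewrite mulrBl !mulrBr !mulrA hx -(mulrA x y x) -hc mulrA hx -(mulrA x y y) hy.
by rewrite subrr subr0.
Qed.

Lemma comm_f (a e f r : V) : A a -> proj A e -> proj A r -> f = 1 - e ->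
  (forall y, A y -> a * y = 0 -> e * y = 0) -> a * f = 0 -> a * (r * f) = 0 ->
  r * f = f * r.
Proof.
move=> aA [eA ee] [rA rr] hf hcar af arf.
have fA : A f by rewrite hf; apply: AB => //; exact: A1.
have ef : e * f = 0 by rewrite hf mulrBr mulr1 -ee subrr.
have ff : f * f = f by rewrite hf perp_idem.
have epf : e + f = 1 by rewrite hf addrC subrK.
set x := r * f + f * r.
have xA : A x by apply: AJ.
have ax : a * x = 0 by rewrite /x mulrDr arf mulrA af mul0r addr0.
have ex := hcar x xA ax.
have xfx : x = f * x by rewrite -{1}(mul1r x) -epf mulrDl ex add0r.
have h1 : r * f = f * r * f.
  have : r * f + f * r = f * r * f + f * r.
    by rewrite -/x {1}xfx /x mulrDr !mulrA ff.
  by move/addIr.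
have erf : e * r * f = 0 by rewrite -mulrA h1 !mulrA ef !mul0r.
have pf : pos f by rewrite -ff; apply: (sa2 HS).
have pr : pos r by rewrite rr; apply: (sa2 HS).
have pe : pos e by rewrite ee; apply: (sa2 HS).
have hr : (e + f) * r * (e + f) = r by rewrite epf mulr1 mul1r.
have g_eq : f * r * e + e * r * f = r - f * r * f - e * r * e.
  transitivity ((e + f) * r * (e + f) - f * r * f - e * r * e); last by rewrite hr.
  rewrite ?mulrDl ?mulrDr ?mulrA; zsolve.
have gA : A (f * r * e + e * r * f).
  rewrite g_eq; apply: AB; [apply: AB|] => //; apply: (sa_posA HS); exact: (sa3 HS).
rewrite erf addr0 in gA.
have g0 : f * r * e = 0.
  apply: sq0 => //.
  have -> : f * r * e * (f * r * e) = f * r * (e * f) * (r * e) by rewrite !mulrA.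
  by rewrite ef mulr0 mul0r.
have : f * r = f * r * e + f * r * f by rewrite -mulrDr epf mulr1.
by rewrite g0 add0r h1 => <-.
Qed.

Lemma carrier_one p q e : proj A p -> proj A q ->
  (forall r, proj A r -> sle pos r p -> sle pos r q -> sle pos r 0) ->
  (forall r, proj A r -> sle pos r (1 - p) -> sle pos r (1 - q) -> sle pos r 0) ->
  is_carrier A (p - q) e -> e = 1.
Proof.
move=> hp hq m1 m2 [he hc].
have [pA pp] := hp; have [qA qq] := hq; have [eA ee] := he.
set f := 1 - e; set a := p - q.
have aA : A a by apply: AB.
have hfp : proj A f by apply: perp_proj.
have [fA ff] := hfp.
have ef : e * f = 0 by rewrite /f mulrBr mulr1 -ee subrr.
have af : a * f = 0 by apply/(hc f fA).
have fa : f * a = 0.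
  have h : a * f * a = 0 by rewrite af mul0r.
  by have [_ ->] := sa4 HS aA (projpos _ hfp) h.
have pf_qf : p * f = q * f by apply/eqP; rewrite -subr_eq0 -mulrBl af.
have fp_fq : f * p = f * q by apply/eqP; rewrite -subr_eq0 -mulrBr fa.
have hcar : forall y, A y -> a * y = 0 -> e * y = 0 by move=> y hy h; apply/(hc y hy).
have apf : a * (p * f) = 0.
  by rewrite /a mulrBl {2}pf_qf !mulrA -pp -qq pf_qf subrr.
have cp : p * f = f * p by apply: (comm_f _ _ _ _ aA he hp (erefl _) hcar af apf).
have cq : q * f = f * q.
  by apply: (comm_f _ _ _ _ aA he hq (erefl _) hcar af); rewrite -pf_qf.
have r1p : proj A (p * f).
  split; first by apply: Acomm.
  by rewrite -mulrA (mulrA f) -cp -mulrA -ff mulrA -pp.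
have r10 : p * f = 0.
  apply: (sa_posN HS); first exact: projpos.
  rewrite -(add0r (- _)); apply: m1 => //.
    rewrite /sle -(sub_idem _ _ (esym pp) (esym ff) cp); apply: (sa2 HS); apply: AB => //; exact: Acomm.
  rewrite /sle pf_qf -(sub_idem _ _ (esym qq) (esym ff) cq); apply: (sa2 HS); apply: AB => //; exact: Acomm.
have fp0 : f * p = 0 by rewrite -cp.
have qf0 : q * f = 0 by rewrite -pf_qf.
have fq0 : f * q = 0 by rewrite -cq.
have key : forall x, proj A x -> x * f = 0 -> f * x = 0 -> sle pos f (1 - x).
  move=> x hx xf fx; have [xA xx] := perp_proj _ hx.
  have e1 : (1 - x) * f = f by rewrite mulrBl mul1r xf subr0.
  have e2 : f * (1 - x) = (1 - x) * f by rewrite mulrBr mulr1 fx subr0 e1.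
  rewrite /sle -e1 -(sub_idem _ _ (esym xx) (esym ff) (esym e2)); apply: (sa2 HS); apply: AB => //; exact: Acomm.
have f0 : f = 0.
  apply: (sa_posN HS); first exact: projpos.
  by rewrite -(add0r (- _)); apply: m2 => //; apply: key.
by apply/esym/eqP; rewrite -subr_eq0 -/f f0.
Qed.

End Syn.

Ltac nexp pp qq pr qr :=
  repeat progress rewrite ?mulrDl ?mulrDr ?mulNr ?mulrN ?opprK ?mulr1 ?mul1r ?mulrA ?pp ?qq ?pr ?qr.

Section Ids.
Variables (V : ringType) (p q : V).
Hypotheses (pp : p * p = p) (qq : q * q = q).
Let pr : forall x, x * p * p = x * p. Proof. by move=> x; rewrite -mulrA pp. Qed.
Let qr : forall x, x * q * q = x * q. Proof. by move=> x; rewrite -mulrA qq. Qed.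
Let a := p - q.
Let b := p - (1 - q).
Let X := p * q * p + (1 - p) * (1 - q) * (1 - p).
Lemma I1 : b * b = X. Proof. rewrite /b /X. nexp pp qq pr qr. zsolve. Qed.
Lemma I2 : a * b = - (b * a). Proof. rewrite /a /b. nexp pp qq pr qr. zsolve. Qed.
Lemma I3 : a * a = 1 - X. Proof. rewrite /a /X. nexp pp qq pr qr. zsolve. Qed.
Lemma I4 : p * X = X * p. Proof. rewrite /X. nexp pp qq pr qr. zsolve. Qed.
Lemma I5 : q = X * p + b * a * p + p * a * b + a * a * (1 - p).
Proof. rewrite /a /b /X. nexp pp qq pr qr. zsolve. Qed.
Lemma I6 : a + b = p + p - 1. Proof. rewrite /a /b. zsolve. Qed.
Lemma I7 : b - a = q + q - 1. Proof. rewrite /a /b. zsolve. Qed.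
End Ids.

Section Cm.
Variable V : ringType.
Lemma cmM (x y z : V) : x * y = y * x -> x * z = z * x -> x * (y * z) = (y * z) * x.
Proof. by move=> h1 h2; rewrite mulrA h1 -mulrA h2 mulrA. Qed.
Lemma cmD (x y z : V) : x * y = y * x -> x * z = z * x -> x * (y + z) = (y + z) * x.
Proof. by move=> h1 h2; rewrite mulrDr mulrDl h1 h2. Qed.
Lemma cmN (x y : V) : x * y = y * x -> x * (- y) = (- y) * x.
Proof. by move=> h; rewrite mulrN mulNr h. Qed.
Lemma cmB (x y z : V) : x * y = y * x -> x * z = z * x -> x * (y - z) = (y - z) * x.
Proof. by move=> h1 h2; apply: cmD => //; apply: cmN. Qed.
Lemma cm1 (x : V) : x * 1 = 1 * x. Proof. by rewrite mulr1 mul1r. Qed.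
Lemma anti_sq (w x : V) : w * x = - (x * w) -> w * (x * x) = (x * x) * w.
Proof. by move=> h; rewrite mulrA h mulNr -(mulrA x w x) h mulrN opprK mulrA. Qed.

Lemma jfacts (p w w' : V) : p * p = p -> w * w' = 1 -> w' * w = 1 ->
  w * p * w' = 1 - p -> w' * p * w = 1 - p ->
  [/\ (w * p + p * w') * p * (w * p + p * w') = 1 - p,
      (w * p + p * w') * (w * p + p * w') = 1,
      (w * p + p * w') * p = (1 - p) * (w * p + p * w') &
      p * (w * p + p * w') = (w * p + p * w') * (1 - p)].
Proof.
move=> pp ww w'w h1 h2.
have wp : w * p = (1 - p) * w by rewrite -h1 -(mulrA (w * p) w' w) w'w mulr1.
have pw : p * w = w * (1 - p) by rewrite -h2 !mulrA ww mul1r.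
have w'p : w' * p = (1 - p) * w' by rewrite -h2 -(mulrA (w' * p) w w') ww mulr1.
have pw' : p * w' = w' * (1 - p) by rewrite -h1 !mulrA w'w mul1r.
have pp1 : p * (1 - p) = 0 by rewrite mulrBr mulr1 pp subrr.
have p1p : (1 - p) * p = 0 by rewrite mulrBl mul1r pp subrr.
have jp : (w * p + p * w') * p = w * p.
  by rewrite mulrDl -mulrA pp -mulrA w'p mulrA pp1 mul0r addr0.
have e1 : w * p * (w * p) = 0 by rewrite !mulrA -(mulrA w p w) pw !mulrA -(mulrA (w * w) (1 - p) p) p1p mulr0.
have e2 : p * w' * (p * w') = 0 by rewrite !mulrA -(mulrA p w' p) w'p !mulrA pp1 !mul0r.
have e3 : w * p * (p * w') = 1 - p by rewrite -mulrA (mulrA p p) pp mulrA.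
have e4 : p * w' * (w * p) = p by rewrite -mulrA (mulrA w') w'w mul1r pp.
have jpj : (w * p + p * w') * p * (w * p + p * w') = 1 - p.
  by rewrite jp mulrDr e1 e3 add0r.
have jj : (w * p + p * w') * (w * p + p * w') = 1.
  by rewrite mulrDl !mulrDr e1 e2 e3 e4 add0r addr0 subrK.
set J := w * p + p * w' in jpj jj *.
split => //.
  transitivity (J * p * (J * J)); first by rewrite jj mulr1.
  by rewrite mulrA jpj.
transitivity (J * J * p * J); first by rewrite jj mul1r.
by rewrite -(mulrA J J p) -(mulrA J (J * p) J) jpj.
Qed.
End Cm.

Ltac cmsolve := repeat first [ assumption | apply: cm1 | apply: cmM | apply: cmD | apply: cmB | apply: cmN ].

Section Syn2.
Variables (R : realType) (V : algType R) (A pos : V -> Prop).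
Hypothesis HS : synaptic A pos.

Lemma anti (x y k w : V) : A x -> A w -> x * y = - (y * x) -> inCC A (y * y) k ->
  y = k * w -> y = w * k -> (forall z, A z -> y * z = 0 -> z = 0) ->
  w * x = - (x * w).
Proof.
move=> xA wA hxy [kA kc] h1 h2 ker.
have cxy : x * (y * y) = y * y * x.
  by rewrite mulrA hxy mulNr -(mulrA y x y) hxy mulrN opprK mulrA.
have kx : k * x = x * k by apply: kc; split.
set g := x * w + w * x.
have kg : k * g = 0.
  rewrite /g mulrDr !mulrA kx -(mulrA x k w) -h1 hxy.
  by rewrite addNr.
have yg : y * g = 0 by rewrite {1}h2 -mulrA kg mulr0.
have g0 : g = 0 by apply: ker yg; exact: (@AJ R V A pos HS _ _ xA wA).
by apply/eqP; rewrite -subr_eq0 opprK addrC -/g g0.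
Qed.
End Syn2.

Arguments carrier_one {R V A pos} HS {p q e}.
Arguments sqrt_uniq {R V A pos} HS {x b d}.
Arguments sqrt_CC {R V A pos} HS {x b}.
Arguments perp_proj {R V A pos} HS {x}.
Arguments Acomm {R V A pos} HS {x y}.
Arguments AJ {R V A pos} HS {x y}.
Arguments AB {R V A pos} HS {x y}.
Arguments Asq {R V A pos} HS {x}.
Arguments anti {R V A pos} HS {x y k w}.
Arguments two_cancel {R V} {z}.
Arguments I1 {V p q}. Arguments I2 {V p q}. Arguments I3 {V p q}. Arguments I4 {V p q}.
Arguments I5 {V p q}. Arguments I6 {V p q}. Arguments I7 {V p q}.
Arguments jfacts {V p w w'}.

Theorem theorem8p3 (R : realType) (V : algType R) (A pos : V -> Prop)
  (p q c u v z : V) :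
  synaptic A pos ->
  proj A p -> proj A q ->
  generic_position A pos p q ->
  is_sqrt A pos (p * q * p + perp p * perp q * perp p) c ->
  polar_symmetry A pos (p - perp q) u ->
  polar_symmetry A pos (p - q) v ->
  proj A z ->
  (inC A p z /\ inC A q z <->
   exists t, proj A t /\ t = t * p /\ t = p * t /\ inC A c t /\
     z = t + (u * v * p + p * v * u) * t * (u * v * p + p * v * u)).
Proof.
move=> HS hp hq gp hcs hu hv hz.
have [pA pp] := hp; have [qA qq] := hq; have [zA zz] := hz.
have pp' : p * p = p by rewrite -pp.
have qq' : q * q = q by rewrite -qq.
case: gp => [[_ [_ [_ m1]]] [[_ [_ [_ m2]]] [[_ [_ [_ m3]]] [_ [_ [_ m4]]]]]].
rewrite /perp in m2 m3 m4 hcs hu.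
have hq' := perp_proj HS hq.
have carb : forall e, is_carrier A (p - (1 - q)) e -> e = 1.
  move=> e he; apply: (carrier_one HS hp hq' m2 _ he).
  by move=> r; rewrite subKr; exact: m3.
have cara : forall e, is_carrier A (p - q) e -> e = 1.
  by move=> e he; apply: (carrier_one HS hp hq m1 m4 he).
case: hu => tu [eu [[tuA [[e1 [he1 tt]] [uC [ab [hab [b1 b2]]]]]] [heu ->]]].
rewrite (carb _ heu) /perp subrr addr0.
rewrite (carb _ he1) in tt.
have ker_b : forall y, A y -> (p - (1 - q)) * y = 0 -> y = 0.
  move=> y yA h; have := (he1.2 y yA).1 h.
  by rewrite (carb _ he1) mul1r.
rewrite (I1 pp' qq') in hab.
have abc : ab = c := sqrt_uniq HS hab hcs.
rewrite abc in b1 b2.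
case: hv => tv [ev [[tvA [[e2 [he2 vv]] [vC [s [hs [a1 a2]]]]]] [hev ->]]].
rewrite (cara _ hev) /perp subrr addr0.
rewrite (cara _ he2) in vv.
have ker_a : forall y, A y -> (p - q) * y = 0 -> y = 0.
  move=> y yA h; have := (he2.2 y yA).1 h.
  by rewrite (cara _ he2) mul1r.
have ab_anti : (p - q) * (p - (1 - q)) = - ((p - (1 - q)) * (p - q)) := I2 pp' qq'.
have ba_anti : (p - (1 - q)) * (p - q) = - ((p - q) * (p - (1 - q))) by rewrite ab_anti opprK.
have Xb := I1 pp' qq'.
have aaX := I3 pp' qq'.
have pX := I4 (q:=q) pp'.
have e6 := I6 (V:=V) (p:=p) (q:=q).
have e7 := I7 (V:=V) (p:=p) (q:=q).
have q5 := I5 pp' qq'.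
set a := p - q in ab_anti ba_anti aaX e6 e7 q5 a1 a2 ker_a vC hs.
set b := p - (1 - q) in ab_anti ba_anti Xb e6 e7 q5 b1 b2 ker_b uC.
set X := p * q * p + (1 - p) * (1 - q) * (1 - p) in hcs Xb aaX pX q5.
have aA : A a by apply: (AB HS).
have bA : A b by apply: (AB HS); [|apply: (AB HS); [exact: (sa_sub1 HS)|]].
have aeq : a = p - q by [].
have beq : b = p - (1 - q) by [].
have Xeq : X = p * q * p + (1 - p) * (1 - q) * (1 - p) by [].
clearbody a b X.
have cA := hcs.1.
have cc : c * c = X := hcs.2.2.
have cCC : inCC A X c := sqrt_CC HS hcs.
have sCC : inCC A (a * a) s := sqrt_CC HS hs.
have sA := hs.1.
have ub : tu * b = b * tu := uC.2 b (conj bA erefl).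
have va : tv * a = a * tv := vC.2 a (conj aA erefl).
have uc : tu * c = c * tu by rewrite -b2 -b1.
have vs : tv * s = s * tv by rewrite -a2 -a1.
have ua : tu * a = - (a * tu).
  apply: (anti HS aA tuA ab_anti _ b1 b2 ker_b); by rewrite Xb.
have vb : tv * b = - (b * tv) := anti HS bA tvA ba_anti sCC a1 a2 ker_a.
have cp : c * p = p * c := cCC.2 p (conj pA (esym pX)).
have aap : a * a * p = p * (a * a) by rewrite aaX; symmetry; cmsolve.
have su : s * tu = tu * s := sCC.2 tu (conj tuA (esym (anti_sq _ _ _ ua))).
have sp : s * p = p * s := sCC.2 p (conj pA aap).
have cX : c * X = X * c by rewrite -cc mulrA.
have aac : a * a * c = c * (a * a) by rewrite aaX; symmetry; cmsolve.
have sc : s * c = c * s := sCC.2 c (conj cA aac).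
have Xv : X * tv = tv * X by rewrite -Xb; apply: esym; apply: anti_sq.
have cv : c * tv = tv * c := cCC.2 tv (conj tvA Xv).
have upu : tu * p * tu = q.
  have h1 : tu * (a + b) * tu = b - a.
    rewrite mulrDr mulrDl ua ub mulNr -!mulrA tt !mulr1 addrC //.
  rewrite e6 e7 in h1.
  apply/eqP; rewrite -subr_eq0; apply/eqP; apply: two_cancel.
  transitivity (tu * (p + p - 1) * tu - (q + q - 1)); last by rewrite h1 subrr.
  repeat progress rewrite ?mulrDr ?mulrDl ?mulrN ?mulNr ?mulr1 ?tt.
  zsolve.
have vpv : tv * p * tv = 1 - q.
  have h1 : tv * (a + b) * tv = - (b - a).
    rewrite mulrDr mulrDl va vb mulNr -!mulrA vv !mulr1 opprB //.
  rewrite e6 e7 in h1.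
  apply/eqP; rewrite -subr_eq0; apply/eqP; apply: two_cancel.
  transitivity (tv * (p + p - 1) * tv + (q + q - 1)); last by rewrite h1 addNr.
  repeat progress rewrite ?mulrDr ?mulrDl ?mulrN ?mulNr ?mulr1 ?vv.
  zsolve.
have uqu : tu * q * tu = p by rewrite -upu !mulrA tt mul1r -mulrA tt mulr1.
have vqv : tv * q * tv = 1 - p.
  have : q = 1 - (1 - q) by rewrite subKr.
  move=> ->; rewrite -vpv.
  repeat progress rewrite ?mulrDr ?mulrDl ?mulrN ?mulNr ?mulr1 ?vv ?mulrA ?mul1r.
  by rewrite -mulrA vv mulr1.
have ww : tu * tv * (tv * tu) = 1 by rewrite mulrA -(mulrA tu tv tv) vv mulr1 tt.
have w'w : tv * tu * (tu * tv) = 1 by rewrite mulrA -(mulrA tv tu tu) tt mulr1 vv.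
have wpw : tu * tv * p * (tv * tu) = 1 - p.
  have -> : tu * tv * p * (tv * tu) = tu * (tv * p * tv) * tu by rewrite !mulrA.
  by rewrite vpv mulrBr mulr1 mulrBl tt uqu.
have w'pw : tv * tu * p * (tu * tv) = 1 - p.
  have -> : tv * tu * p * (tu * tv) = tv * (tu * p * tu) * tv by rewrite !mulrA.
  by rewrite upu vqv.
have [jpj jj jp pj] := jfacts pp' ww w'w wpw w'pw.
have jeq : tu * tv * p + p * tv * tu = tu * tv * p + p * (tv * tu) by rewrite mulrA.
rewrite jeq.
set j := tu * tv * p + p * (tv * tu) in jpj jj jp pj *.
have cu : c * tu = tu * c by rewrite uc.
have cj : c * j = j * c by rewrite /j; cmsolve.
have sv : s * tv = tv * s by rewrite vs.
have sj : s * j = j * s by rewrite /j; cmsolve.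
split.
  case=> [[_ pz] [_ qz]].
  have zp : z * p = p * z by rewrite pz.
  have zq : z * q = q * z by rewrite qz.
  have zb : z * b = b * z by rewrite beq; cmsolve.
  have za : z * a = a * z by rewrite aeq; cmsolve.
  have uz : tu * z = z * tu := uC.2 z (conj zA (esym zb)).
  have vz : tv * z = z * tv := vC.2 z (conj zA (esym za)).
  have zX : z * X = X * z by rewrite Xeq; cmsolve.
  have cz : c * z = z * c := cCC.2 z (conj zA (esym zX)).
  have zu : z * tu = tu * z by rewrite uz.
  have zv : z * tv = tv * z by rewrite vz.
  have zj : z * j = j * z by rewrite /j; cmsolve.
  exists (z * p); split; [|split; [|split; [|split]]].
  - split; first by apply: (Acomm HS zA pA zp).
    by rewrite -(mulrA z p (z * p)) (mulrA p z p) pz -(mulrA z p p) pp' mulrA -zz.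
  - by rewrite -mulrA pp'.
  - by rewrite mulrA pz -mulrA pp'.
  - split; first by apply: (Acomm HS zA pA zp).
    by rewrite /Defs.commute mulrA cz -mulrA cp mulrA.
  - rewrite (mulrA j z p) -zj -(mulrA z j p) -(mulrA z (j * p) j) jpj.
    by rewrite mulrBr mulr1 addrC subrK.
case=> t [[tA tt'] [tp [pt [[_ ct] zdef]]]].
have zp : z * p = t.
  rewrite zdef mulrDl -tp -(mulrA (j * t) j p) jp (mulrA (j * t) (1 - p) j).
  by rewrite -(mulrA j t (1 - p)) mulrBr mulr1 -tp subrr mulr0 mul0r addr0.
have pz : p * z = t.
  rewrite zdef mulrDr -pt (mulrA p (j * t) j) (mulrA p j t) pj -(mulrA j (1 - p) t).
  by rewrite mulrBl mul1r -pt subrr mulr0 mul0r addr0.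
have zp' : z * p = p * z by rewrite zp pz.
have tc : t * c = c * t by rewrite ct.
have cz : c * z = z * c by rewrite zdef; cmsolve.
have zc : z * c = c * z by rewrite cz.
have aat : a * a * t = t * (a * a) by rewrite aaX -cc; symmetry; cmsolve.
have st : s * t = t * s := sCC.2 t (conj tA aat).
have sz : s * z = z * s by rewrite zdef; cmsolve.
have zs : z * s = s * z by rewrite sz.
have zj : z * j = j * z.
  rewrite zdef (mulrDl t (j * t * j) j) (mulrDr j t (j * t * j)) -(mulrA (j * t) j j) jj mulr1.
  by rewrite (mulrA j (j * t) j) (mulrA j j t) jj mul1r addrC.
have zX : z * X = X * z by rewrite -cc; cmsolve.
have zaa : z * (a * a) = a * a * z by rewrite aaX; cmsolve.
have e2a : a * b = c * s * (tv * tu).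
  by rewrite a1 b1 !mulrA -(mulrA s tv c) -cv (mulrA s c tv) sc.
have e2b : b * a * p = c * s * (tu * tv * p).
  by rewrite a1 b1 !mulrA -(mulrA c tu s) -su (mulrA c s tu).
have pc : p * c = c * p by rewrite cp.
have ps : p * s = s * p by rewrite sp.
have pcs : p * (c * s) = c * s * p by cmsolve.
have e2c : p * a * b = c * s * (p * (tv * tu)).
  by rewrite -mulrA e2a mulrA pcs !mulrA.
have csj : b * a * p + p * a * b = c * s * j by rewrite e2b e2c -mulrDr.
split.
  by split => //; rewrite /Defs.commute pz zp.
split => //; rewrite /Defs.commute q5 -(addrA (X * p)) csj.
symmetry; cmsolve.
Qed.
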